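(* Let $r$ and $k$ be positive integers, and let $G$ be a graph with $\chi(G)\le r$. Let $P\subset V(G)$ and let $d\colon P\to[r+k]$ be a precoloring of $P$ in $G$. Let $H$ be the complete graph with $V(H)=[r+k]$, and let $\mathbf{E}^d=(E_0^d,E_1^d,E_2^d)$ be as defined in the context. (1) If $k\le r$ and $H$ has a good matching for $\mathbf{E}^d$ of order $\lfloor\frac12(r+k)\rfloor$, then $d$ can be extended to a $\lceil\frac{3r+k}{2}\rceil$-coloring of $G$. (2) If $k>r$ and $H$ has a good matching for $\mathbf{E}^d$ of order $r$, then $d$ can be extended to an $(r+k)$-coloring of $G$.
   Context: $\mathcal{D}_G(P,2)=\{\{x,y\}\subset P: x\ne y,\ d_G(x,y)\le 2\}$. $[m]=\{1,\dots,m\}$. A precoloring of $P$ in $G$ is a proper coloring of $G[P]$; an $m$-coloring is a proper coloring with at most $m$ colors; $d$ is extended by $f$ if $f(v)=d(v)$ for all $v\in P$. For each edge $e=ij$ of $H$, $\varphi(e)=|\{\{x,y\}\in\mathcal{D}_G(P,2):\{d(x),d(y)\}=\{i,j\}\}|$, and $E_0^d=\{e:\varphi(e)=0\}$, $E_1^d=\{e:\varphi(e)=1\}$, $E_2^d=\{e:\varphi(e)\ge2\}$, $\mathbf{E}^d=(E_0^d,E_1^d,E_2^d)$. For an ordered partition $\mathbf{E}=(E_0,E_1,E_2)$ of $E(H)$ (pairwise disjoint sets, possibly empty, with union $E(H)$), a matching $M$ of $H$ is a good matching for $\mathbf{E}$ if $M\cap E_2=\emptyset$ and $|M\cap E_1|\le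 1$. The order of a matching is its number of edges. *)

(* Defs.v *)
From mathcomp Require Import all_boot.
Set Implicit Arguments. Unset Strict Implicit. Unset Printing Implicit Defensive.

(* Finite simple graph: vertex type T : finType, adjacency e : rel T,
   assumed symmetric and irreflexive in the theorem. Colors are natural numbers. *)

Definition proper (T : finType) (e : rel T) (f : T -> nat) : Prop :=
  forall x y, e x y -> f x != f y.

Definition m_coloring (T : finType) (e : rel T) (m : nat) (f : T -> nat) : Prop :=
  proper e f /\ size (undup [seq f x | x <- enum T]) <= m.

Definition colorable (T : finType) (e : rel T) (m : nat) : Prop :=
  exists f : T -> nat, m_coloring e m f.

Definition dist_le2 (T : finType) (e : rel T) (x y : T) : bool :=
  e x y || [exists z, e x z && e z y].

Definition D2 (T : finType) (e : rel T) (P : {set T}) : {set {set T}} :=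
  [set S : {set T} | [exists x, exists y,
     [&& x \in P, y \in P, x != y, dist_le2 e x y & S == [set x; y]]]].

Definition precoloring (T : finType) (e : rel T) (P : {set T}) (n : nat)
  (d : T -> nat) : Prop :=
  (forall x, x \in P -> 1 <= d x <= n) /\
  (forall x y, x \in P -> y \in P -> e x y -> d x != d y).

Definition phi (T : finType) (e : rel T) (P : {set T}) (d : T -> nat)
  (i j : nat) : nat :=
  #|[set S in D2 e P | [exists x, exists y,
       [&& S == [set x; y], d x == i & d y == j]]]|.

(* A matching of the complete graph H on [n] = {1,...,n}: a list of edges (i,j)
   with 1 <= i < j <= n, pairwise vertex-disjoint.  Its order is its size. *)
Definition H_matching (n : nat) (M : seq (nat * nat)) : bool :=
  all (fun p => (1 <= p.1) && (p.1 < p.2 <= n)) M &&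
  pairwise (fun a b => [&& a.1 != b.1, a.1 != b.2, a.2 != b.1 & a.2 != b.2]) M.

(* good matching for E^d: no edge of E_2^d (phi >= 2), at most one edge of E_1^d *)
Definition good_matching (T : finType) (e : rel T) (P : {set T}) (d : T -> nat)
  (n : nat) (M : seq (nat * nat)) : Prop :=
  H_matching n M /\
  all (fun p => phi e P d p.1 p.2 <= 1) M /\
  count (fun p => phi e P d p.1 p.2 == 1) M <= 1.

Definition extends_to (T : finType) (e : rel T) (P : {set T}) (d : T -> nat)
  (m : nat) : Prop :=
  exists f : T -> nat, m_coloring e m f /\ (forall v, v \in P -> f v = d v).

(* Main.v *)
Require Import Defs.
From mathcomp Require Import all_boot zify.
Set Implicit Arguments. Unset Strict Implicit. Unset Printing Implicit Defensive.

Lemma colors_bound (T : finType) (f : T -> nat) m :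
  (forall v, 1 <= f v <= m) -> size (undup [seq f x | x <- enum T]) <= m.
Proof.
move=> hf; have -> : m = size (iota 1 m) by rewrite size_iota.
apply: uniq_leq_size; first exact: undup_uniq.
move=> c; rewrite mem_undup => /mapP [x _ ->]; rewrite mem_iota.
by have := hf x; lia.
Qed.

Lemma extend_core (r k m : nat) (T : finType) (e : rel T)
  (e_sym : symmetric e) (P : {set T}) (d : T -> nat)
  (hd : precoloring e P (r + k) d)
  (cls : T -> nat) (hcls : forall u v, e u v -> cls u != cls v)
  (hclsr : forall v, cls v < r) (M : seq (nat * nat))
  (hM : H_matching (r + k) M) (hsz : size M <= r)
  (hm1 : r + k <= m) (hm2 : 2 * r + k - size M <= m)
  (hcore : forall t v u w, t < size M -> v \notin P -> cls v = t ->
     u \in P -> w \in P -> e v u -> e v w ->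
     d u = (nth (0,0) M t).1 -> d w = (nth (0,0) M t).2 -> False) :
  extends_to e P d m.
Proof.
case: hd => hdr hdp.
case/andP: hM => /allP hMr /(pairwiseP (0,0)) hMp.
have hnth : forall t, t < size M ->
   1 <= (nth (0,0) M t).1 /\ (nth (0,0) M t).1 < (nth (0,0) M t).2 <= r + k.
  move=> t ht; have /andP[h1 h2] := hMr _ (mem_nth (0,0) ht); by split.
pose g v := let t := cls v in
  if t < size M then
    (if [exists u, [&& u \in P, e v u & d u == (nth (0,0) M t).1]]
     then (nth (0,0) M t).2 else (nth (0,0) M t).1)
  else r + k + 1 + (t - size M).
pose f v := if v \in P then d v else g v.
have hgr : forall v, r + k < g v \/ (cls v < size M /\
   (g v = (nth (0,0) M (cls v)).1 \/ g v = (nth (0,0) M (cls v)).2)).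
  move=> v; rewrite /g; case: ifP => ht; last by left; lia.
  by right; split => //; case: ifP; [right|left].
exists f; split; last by move=> v hv; rewrite /f hv.
split; last first.
  apply: colors_bound => v; rewrite /f; case: ifP => hv.
    by have := hdr v hv; lia.
  have := hclsr v; rewrite /g; case: ifP => ht; last by lia.
  have := hnth _ ht; case: ifP; lia.
have mixed : forall v w, v \notin P -> w \in P -> e v w -> g v != d w.
  move=> v w hv hw hvw; rewrite /g; case: ifP => ht; last first.
    by have := hdr w hw; lia.
  case: ifP.
    move=> /existsP [u /and3P [hu hvu /eqP hdu]].
    apply/eqP => hdw; apply: (hcore (cls v) v u w) => //.
  move=> /negbT /existsP hn; apply/eqP => hdw; apply: hn; exists w.
  by rewrite hw hvw hdw eqxx.
move=> v w hvw; rewrite /f.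
case: ifP => hv; case: ifP => hw.
- exact: hdp.
- by rewrite eq_sym; apply: mixed; rewrite ?hw ?hv // e_sym.
- by apply: mixed; rewrite ?hw ?hv.
have hc := hcls _ _ hvw.
case: (hgr v) => [h1|[t1 e1]]; case: (hgr w) => [h2|[t2 e2]].
- have fr : forall u, r + k < g u -> size M <= cls u /\ g u = r + k + 1 + (cls u - size M).
    move=> u; rewrite /g; case: ifP => ht; last by lia.
    have := hnth _ ht; case: ifP; lia.
  have [? ?] := fr _ h1; have [? ?] := fr _ h2; move: hc; lia.
- have := hnth _ t2; case: e2 => ->; lia.
- have := hnth _ t1; case: e1 => ->; lia.
have key : forall a b, a < size M -> b < size M -> a < b ->
   [&& (nth (0,0) M a).1 != (nth (0,0) M b).1, (nth (0,0) M a).1 != (nth (0,0) M b).2,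
       (nth (0,0) M a).2 != (nth (0,0) M b).1 & (nth (0,0) M a).2 != (nth (0,0) M b).2].
  by move=> a b ha hb hab; apply: hMp.
case: (ltngtP (cls v) (cls w)) => hlt; last by rewrite hlt eqxx in hc.
- have /and4P[? ? ? ?] := key _ _ t1 t2 hlt.
  by case: e1 => ->; case: e2 => ->.
- have /and4P[? ? ? ?] := key _ _ t2 t1 hlt.
  by case: e1 => ->; case: e2 => ->; rewrite eq_sym.
Qed.

Lemma classes_of (T : finType) (e : rel T) r : colorable e r ->
  exists cls : T -> nat, (forall u v, e u v -> cls u != cls v) /\ forall v, cls v < r.
Proof.
case=> f0 [hp hs]; set s := undup _ in hs.
have mem : forall v, f0 v \in s by move=> v; rewrite mem_undup map_f // mem_enum.
exists (fun v => index (f0 v) s); split.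
  move=> u v huv; apply/negP => /eqP h; move: (hp _ _ huv).
  by rewrite -(nth_index 0 (mem u)) h nth_index ?eqxx.
by move=> v; apply: leq_trans hs; rewrite index_mem.
Qed.

Lemma relabel (T : finType) (e : rel T) r (cls : T -> nat)
  (hcls : forall u v, e u v -> cls u != cls v) (hr : forall v, cls v < r) x p :
  p < r -> exists cls' : T -> nat, [/\ (forall u v, e u v -> cls' u != cls' v),
     (forall v, cls' v < r) & cls' x = p].
Proof.
move=> hp; pose sw t := if t == cls x then p else if t == p then cls x else t.
have swK : involutive sw.
  move=> t; rewrite /sw; case: (eqVneq t (cls x)) => [->|h1].
    by rewrite eqxx; case: eqVneq.
  case: (eqVneq t p) => [->|h2]; first by rewrite eqxx.
  by rewrite (negbTE h1) (negbTE h2).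
exists (sw \o cls); split => /=.
- by move=> u v huv; rewrite (inj_eq (can_inj swK)); apply: hcls.
- by move=> v; rewrite /sw; case: ifP => //; case: ifP.
- by rewrite /sw eqxx.
Qed.

Lemma count_uniq (A : eqType) (a : pred A) (M : seq A) x0 t t' :
  count a M <= 1 -> t < size M -> t' < size M -> a (nth x0 M t) -> a (nth x0 M t') -> t = t'.
Proof.
wlog: t t' / t <= t'.
  move=> W hc h1 h2 h3 h4; case: (leqP t t') => h; first exact: W.
  by apply/esym/W => //; lia.
move=> hle hc h1 h2 h3 h4; case: (ltngtP t t') => // hlt; exfalso.
move: hc; rewrite -(cat_take_drop t' M) count_cat.
have c1 : 0 < count a (take t' M).
  rewrite -has_count; apply/hasP; exists (nth x0 M t) => //.
  rewrite -(nth_take x0 hlt). apply: (@mem_nth A x0 (take t' M) t); rewrite size_take; case: ifP => //; lia.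
have c2 : 0 < count a (drop t' M).
  rewrite -has_count; apply/hasP; exists (nth x0 M t') => //.
  have := @mem_nth A x0 (drop t' M) 0; rewrite nth_drop addn0 size_drop; apply; lia.
lia. lia.
Qed.

Definition phiset (T : finType) (e : rel T) (P : {set T}) (d : T -> nat) (i j : nat) :=
  [set S in D2 e P | [exists x, exists y, [&& S == [set x; y], d x == i & d y == j]]].

Lemma pair_in (T : finType) (e : rel T) (e_sym : symmetric e) (P : {set T}) (d : T -> nat)
  a b v u w : a < b -> u \in P -> w \in P -> e v u -> e v w -> d u = a -> d w = b ->
  [set u; w] \in phiset e P d a b.
Proof.
move=> hab hu hw hvu hvw hdu hdw; rewrite inE; apply/andP; split.
  rewrite inE; apply/existsP; exists u; apply/existsP; exists w.
  rewrite hu hw /= eqxx andbT; apply/andP; split.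
    by apply/eqP => huw; move: hdu hdw; rewrite huw => ->; lia.
  rewrite /dist_le2; apply/orP; right; apply/existsP; exists v.
  by rewrite e_sym hvu hvw.
by apply/existsP; exists u; apply/existsP; exists w; rewrite eqxx hdu hdw !eqxx.
Qed.

Lemma derive_core (r k : nat) (T : finType) (e : rel T)
  (e_sym : symmetric e) (hchi : colorable e r)
  (P : {set T}) (d : T -> nat) M (hM : good_matching e P d (r + k) M)
  (hsz : size M <= r) :
  exists cls : T -> nat, [/\ (forall u v, e u v -> cls u != cls v),
     (forall v, cls v < r) &
  (forall t v u w, t < size M -> v \notin P -> cls v = t ->
     u \in P -> w \in P -> e v u -> e v w ->
     d u = (nth (0,0) M t).1 -> d w = (nth (0,0) M t).2 -> False)].
Proof.
case: hM => hH [/allP hall hcnt].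
case/andP: (hH) => /allP hMr _.
have hlt : forall t, t < size M -> (nth (0,0) M t).1 < (nth (0,0) M t).2.
  by move=> t ht; have /andP[_ /andP[]] := hMr _ (mem_nth (0,0) ht).
have one : forall t v u w, t < size M -> u \in P -> w \in P -> e v u -> e v w ->
     d u = (nth (0,0) M t).1 -> d w = (nth (0,0) M t).2 ->
     phi e P d (nth (0,0) M t).1 (nth (0,0) M t).2 == 1.
  move=> t v u w ht hu hw hvu hvw hdu hdw.
  have hin := pair_in e_sym (hlt _ ht) hu hw hvu hvw hdu hdw.
  have /= h1 := hall _ (mem_nth (0,0) ht).
  have h2 : 0 < phi e P d (nth (0,0) M t).1 (nth (0,0) M t).2.
    by apply/card_gt0P; exists [set u; w].
  apply/eqP; lia.
have [cls0 [hc0 hr0]] := classes_of hchi.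
case hh: (has (fun p => phi e P d p.1 p.2 == 1) M); last first.
  exists cls0; split => // t v u w ht _ _ hu hw hvu hvw hdu hdw.
  move/negbT/hasPn: hh => /(_ _ (mem_nth (0,0) ht)) /negP; apply.
  exact: (one t v u w).
set p := find (fun p => phi e P d p.1 p.2 == 1) M.
have hp : p < size M by rewrite -has_find.
have hpp := nth_find (0,0) hh; rewrite -/p /= in hpp.
have : 0 < phi e P d (nth (0,0) M p).1 (nth (0,0) M p).2 by rewrite (eqP hpp).
move=> /card_gt0P [S hS].
have hS' := hS; rewrite inE in hS'; case/andP: hS' => hSD _.
rewrite inE in hSD; case/existsP: hSD => x /existsP [y /and5P [_ _ _ _ /eqP hSxy]].
have [cls [hc hr hx]] := relabel hc0 hr0 x (leq_trans hp hsz).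
exists cls; split => // t v u w ht hv hvt hu hw hvu hvw hdu hdw.
have h1 := one t v u w ht hu hw hvu hvw hdu hdw.
have etp : t = p.
  apply: (count_uniq (x0 := (0,0)) hcnt ht hp h1 hpp).
rewrite etp in ht hvt hdu hdw h1.
have hin := pair_in e_sym (hlt _ ht) hu hw hvu hvw hdu hdw.
have hc1 : phi e P d (nth (0,0) M p).1 (nth (0,0) M p).2 <= 1.
  exact: (hall _ (mem_nth (0,0) ht)).
move/card_le1_eqP: hc1 => hc1. have eqS := hc1 _ _ hS hin.
have : x \in [set u; w] by rewrite eqS hSxy !inE eqxx.
rewrite !inE => /orP [] /eqP hx'.
- by have := hc _ _ hvu; rewrite -hx' hvt hx eqxx.
- by have := hc _ _ hvw; rewrite -hx' hvt hx eqxx.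
Qed.

Theorem lemma10 (r k : nat) (T : finType) (e : rel T)
  (e_sym : symmetric e) (e_irr : irreflexive e)
  (hr : 0 < r) (hk : 0 < k)
  (hchi : colorable e r)
  (P : {set T}) (d : T -> nat) (hd : precoloring e P (r + k) d) :
  ((k <= r) ->
     (exists M, good_matching e P d (r + k) M /\ size M = (r + k)./2) ->
     extends_to e P d ((3 * r + k).+1./2)) /\
  ((r < k) ->
     (exists M, good_matching e P d (r + k) M /\ size M = r) ->
     extends_to e P d (r + k)).
Proof.
split => hkr [M [hM hsz]].
- have hsz' : size M <= r by rewrite hsz -divn2; lia.
  have [cls [hc hcr hcore]] := derive_core e_sym hchi hM hsz'.
  apply: (extend_core e_sym hd hc hcr hM.1 hsz') => //;
    rewrite ?hsz -?divn2; lia.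
- have hsz' : size M <= r by rewrite hsz.
  have [cls [hc hcr hcore]] := derive_core e_sym hchi hM hsz'.
  apply: (extend_core e_sym hd hc hcr hM.1 hsz') => //; rewrite ?hsz; lia.
Qed.
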